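(* Let $p\in(0,1)$ and let $B$ be a $\lfloor 1/p\rfloor$-matching (a set of edges of a graph in which every vertex is incident to at most $\lfloor 1/p\rfloor$ edges). Let $B_p$ be the random subset of $B$ obtained by keeping each edge independently with probability $p$. Then $$\mathbb{E}[\mu(B_p)]\ \ge\ \frac{|B|}{\lfloor 1/p\rfloor}\cdot\frac{1-3p}{3}.$$
   Context: $\mu(X)$ denotes the maximum matching size of the graph formed by the edge set $X$. *)

(* Defs.v *)
From HB Require Import structures.
From mathcomp Require Import all_boot all_order all_algebra.
Set Implicit Arguments. Unset Strict Implicit. Unset Printing Implicit Defensive.
Import Order.TTheory GRing.Theory Num.Theory.

Definition edge_set (V : finType) (X : {set {set V}}) : bool :=
  [forall e in X, #|e| == 2]%N.

Definition edeg (V : finType) (X : {set {set V}}) (v : V) : nat :=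
  #|[set e in X | v \in e]|.

Definition is_bmatching (V : finType) (b : nat) (X : {set {set V}}) : bool :=
  [forall v, edeg X v <= b]%N.

Definition mu (V : finType) (X : {set {set V}}) : nat :=
  \max_(M : {set {set V}} | (M \subset X) && is_bmatching 1 M) #|M|.

(* E[mu(X_p)] where X_p keeps each edge of X independently with probability p *)
Definition exp_mu_sample (R : numDomainType) (V : finType) (p : R)
    (X : {set {set V}}) : R :=
  \sum_(S : {set {set V}} | S \subset X)
     (p ^+ #|S| * (1 - p) ^+ (#|X| - #|S|) * (mu S)%:R).

(* Main.v *)
Require Import Defs.
From HB Require Import structures.
From mathcomp Require Import all_boot all_order all_algebra.
From mathcomp Require Import zify.
From mathcomp Require Import ring lra.
Import Order.TTheory GRing.Theory Num.Theory.

Section Comb.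
Variable V : finType.
Implicit Types (S M : {set {set V}}) (e f : {set V}).

Definition adj e f : bool := (f != e) && ~~ [disjoint e & f].
Definition dS S e := #|[set f in S | adj e f]|.
Definition PS S := (\sum_(e in S) dS S e)%N.

Lemma mu_ge M S : M \subset S -> is_bmatching 1 M -> (#|M| <= mu S)%N.
Proof.
move=> h1 h2; rewrite /mu.
apply: (@leq_bigmax_cond _ (fun M => (M \subset S) && is_bmatching 1 M) (fun M => #|M|)).
by rewrite h1 h2.
Qed.

Lemma mu_add S S' e : e \in S -> S' \subset S -> e \notin S' ->
  (forall f, f \in S' -> [disjoint e & f]) -> (mu S' < mu S)%N.
Proof.
move=> eS sub eN hd.
have h : forall M, M \subset S' -> is_bmatching 1 M -> (#|M|.+1 <= mu S)%N.
  move=> M MS Mm.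
  have eM : e \notin M by apply: contra eN; apply: (subsetP MS).
  have -> : #|M|.+1 = #|e |: M| by rewrite cardsU1 eM.
  apply: mu_ge.
    by rewrite subUset sub1set eS (subset_trans MS sub).
  apply/forallP => v; rewrite /edeg.
  case: (boolP (v \in e)) => hv.
    apply: leq_trans (_ : #|[set e]| <= 1)%N; last by rewrite cards1.
    apply: subset_leq_card; apply/subsetP => f; rewrite !inE.
    case/andP => /orP[/eqP -> //| fM] vf.
    have := hd f (subsetP MS f fM).
    by move/disjointFr => /(_ v hv); rewrite vf.
  move/forallP: Mm => /(_ v); apply: leq_trans.
  apply: subset_leq_card; apply/subsetP => f; rewrite !inE.
  case/andP => /orP[/eqP -> | fM] vf; first by rewrite vf in hv.
  by rewrite fM vf.
have h1 : (1 <= mu S)%N.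
  by have := h set0 (sub0set _); rewrite cards0; apply; apply/forallP => v;
    rewrite /edeg (_ : [set e in set0 | _] = set0) ?cards0 //;
    apply/setP => x; rewrite !inE.
have : (mu S' <= (mu S).-1)%N.
  rewrite /mu; apply/bigmax_leqP => M /andP[MS Mm].
  have := h M MS Mm; rewrite /mu; lia.
lia.
Qed.

Lemma comb_main n S : (#|S| <= n)%N -> (5 * #|S| <= 9 * mu S + PS S)%N.
Proof.
elim: n S => [|n IH] S.
  by rewrite leqn0 => /eqP ->.
move=> hS.
case: (set_0Vmem S) => [-> | [e0 e0S]]; first by rewrite cards0.
case: (@arg_minnP _ e0 (fun e => e \in S) (dS S) e0S) => e eS emin.
set d := dS S e.
set N := [set f in S | (f == e) || adj e f].
set S' := S :\: N.
have eN : e \in N by rewrite inE eS eqxx.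
have hc : #|S :&: N| + #|S'| = #|S| by rewrite cardsID.
have hSN : S :&: N = e |: [set f in S | adj e f].
  apply/setP => f; rewrite !inE; case: (eqVneq f e) => [->|fe] /=.
    by rewrite eS.
  by case: (f \in S).
have hcN : #|S :&: N| = d.+1.
  by rewrite hSN cardsU1 inE /adj eqxx /= andbF.
have hS' : (#|S'| <= n)%N.
  have : (0 < #|S :&: N|)%N by rewrite hcN.
  lia.
have IH' := IH S' hS'.
have hP : PS S = (\sum_(f in S :&: N) dS S f + \sum_(f in S') dS S f)%N.
  by rewrite /PS (big_setID N).
have hPN : (#|S :&: N| * d <= \sum_(f in S :&: N) dS S f)%N.
  rewrite -sum_nat_const; apply: leq_sum => f; rewrite inE => /andP[fS _].
  exact: emin.
have hP' : (PS S' <= \sum_(f in S') dS S f)%N.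
  apply: leq_sum => f _; apply: subset_leq_card; apply/subsetP => g.
  by rewrite !inE => /andP[/andP[_ ->] ->].
have hmu : (mu S' < mu S)%N.
  apply: (@mu_add S S' e eS); first exact: subsetDl.
    by rewrite inE eN.
  move=> f; rewrite !inE => /andP[hf fS]; move: hf; rewrite fS /= negb_or.
  case/andP => fe; rewrite /adj fe /=; exact: negbNE.
rewrite hP; rewrite hcN in hc hPN.
have key : (5 * d.+1 <= 9 + d.+1 * d)%N.
  clearbody d; clear -d; case: d => [|[|[|[|[|k]]]]] //.
  rewrite !mulSn !mulnS; lia.
move: hPN key; set k := (d.+1 * d)%N => hPN key.
lia.
Qed.

End Comb.
Arguments adj {V}. Arguments dS {V}. Arguments PS {V}.
Local Open Scope ring_scope.
Lemma gen_sum (R : comNzRingType) (T : finType) (A D : {set T}) (p q : R) :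
  A \subset D ->
  \sum_(J : {set T} | J \subset D) (if A \subset J then p ^+ #|J| * q ^+ (#|D| - #|J|) else 0)
  = p ^+ #|A| * (p + q) ^+ (#|D| - #|A|).
Proof.
move=> AD.
pose F i := if i \in D then p else 0.
pose G i := if i \in A then 0 else if i \in D then q else 1.
have E1 : \prod_i (F i + G i) = p ^+ #|A| * (p + q) ^+ (#|D| - #|A|).
  rewrite (bigID (mem A)) /=.
  congr (_ * _).
    rewrite -prodr_const; apply: eq_bigr => i iA.
    by rewrite /F /G iA (subsetP AD i iA) addr0.
  have -> : (#|D| - #|A| = #|D :\: A|)%N by rewrite cardsD (setIidPr AD).
  rewrite -prodr_const [LHS]big_mkcond [RHS]big_mkcond /=.
  apply: eq_bigr => i _; rewrite !inE /F /G.
  by case: (i \in A); case: (i \in D); rewrite /= ?add0r ?addr0.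
rewrite -E1 bigA_distr [LHS]big_mkcond /=.
apply: eq_bigr => J _.
case: (boolP (J \subset D)) => JD; last first.
  case/subsetPn: JD => i iJ iD.
  by rewrite (bigD1 i) //= iJ /F (negbTE iD) mul0r.
case: (boolP (A \subset J)) => AJ; last first.
  case/subsetPn: AJ => i iA iJ.
  by rewrite (bigD1 i) //= (negbTE iJ) /G iA mul0r.
rewrite (bigID (mem J)) /=.
congr (_ * _).
  rewrite -prodr_const; apply: eq_bigr => i iJ.
  by rewrite iJ /F (subsetP JD i iJ).
have -> : (#|D| - #|J| = #|D :\: J|)%N by rewrite cardsD (setIidPr JD).
rewrite -prodr_const [LHS]big_mkcond [RHS]big_mkcond /=.
apply: eq_bigr => i _; rewrite !inE /G.
case iJ: (i \in J) => //=.
have -> : (i \in A) = false by apply/negbTE; apply: contraFN iJ; apply: (subsetP AJ).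
by case: (i \in D).
Qed.

Section Prob.
Variables (R : archiRealFieldType) (V : finType) (p : R) (B : {set {set V}}).
Local Open Scope ring_scope.

Definition w (S : {set {set V}}) : R := p ^+ #|S| * (1 - p) ^+ (#|B| - #|S|).

Lemma wsum (A : {set {set V}}) : A \subset B ->
  \sum_(S : {set {set V}} | S \subset B) (if A \subset S then w S else 0) = p ^+ #|A|.
Proof.
move=> AB; rewrite /w gen_sum //.
have -> : p + (1 - p) = 1 by rewrite addrC subrK.
by rewrite expr1n mulr1.
Qed.

Lemma sum_sub (S : {set {set V}}) (g : {set V} -> R) : S \subset B ->
  \sum_(e in S) g e = \sum_(e in B) (if e \in S then g e else 0).
Proof.
move=> SB; rewrite big_mkcond [RHS]big_mkcond; apply: eq_bigr => e _.
by case eS: (e \in S); rewrite ?(subsetP SB e eS) //; case: (e \in B).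
Qed.

Lemma card_sum (X : {set {set V}}) : (#|X|%:R : R) = \sum_(e in X) 1.
Proof. by rewrite sumr_const. Qed.

Lemma ES : \sum_(S : {set {set V}} | S \subset B) w S * #|S|%:R = p * #|B|%:R.
Proof.
transitivity (\sum_(S : {set {set V}} | S \subset B)
   \sum_(e in B) (if [set e] \subset S then w S else 0)).
  apply: eq_bigr => S SB; rewrite card_sum (sum_sub _ _ SB) big_distrr.
  apply: eq_bigr => e _; rewrite sub1set.
  by case: (e \in S); [exact: mulr1 | exact: mulr0].
rewrite exchange_big /=.
transitivity (\sum_(e in B) p).
  by apply: eq_bigr => e eB; rewrite wsum ?sub1set // cards1 expr1.
by rewrite sumr_const mulr_natr.
Qed.

Lemma PSR (S : {set {set V}}) : S \subset B ->
  ((PS S)%:R : R) = \sum_(e in B) \sum_(f in B)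
       (if [set e; f] \subset S then (adj e f)%:R else 0).
Proof.
move=> SB; rewrite /PS natr_sum (sum_sub _ _ SB); apply: eq_bigr => e eB.
case eS: (e \in S); last first.
  by rewrite big1 // => f _; rewrite subUset sub1set eS.
rewrite /dS card_sum big_mkcond [RHS]big_mkcond; apply: eq_bigr => f _.
rewrite !inE subUset !sub1set eS /=.
case fS: (f \in S) => /=.
  by rewrite (subsetP SB f fS); case: (adj e f).
by case: (f \in B).
Qed.

Lemma EP : \sum_(S : {set {set V}} | S \subset B) w S * (PS S)%:R
   = p ^+ 2 * (PS B)%:R.
Proof.
transitivity (\sum_(S : {set {set V}} | S \subset B) \sum_(e in B) \sum_(f in B)
    (adj e f)%:R * (if [set e; f] \subset S then w S else 0)).
  apply: eq_bigr => S SB; rewrite PSR // big_distrr; apply: eq_bigr => e _.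
  rewrite big_distrr; apply: eq_bigr => f _.
  by case: (_ \subset S); [exact: mulrC | exact: (etrans (mulr0 _) (esym (mulr0 _)))].
rewrite exchange_big /= (PSR _ (subxx B)) big_distrr; apply: eq_bigr => e eB.
rewrite exchange_big big_distrr; apply: eq_bigr => f fB /=.
rewrite -big_distrr wsum; last by rewrite subUset !sub1set eB fB.
rewrite subUset !sub1set eB fB /=.
case h: (adj e f); last by rewrite !mul0r mulr0.
have ef : e != f by move: h; rewrite /adj eq_sym => /andP[].
by rewrite cards2 ef mul1r mulr1.
Qed.

Lemma deg_bound (b : nat) : edge_set B -> is_bmatching b B ->
  (PS B + 2 * #|B| <= 2 * b * #|B|)%N.
Proof.
move=> hE hB.
have h : forall e, e \in B -> (dS B e + 2 <= 2 * b)%N.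
  move=> e eB.
  move/forallP: hE => /(_ e) /implyP /(_ eB).
  case/cards2P => u [v [uv de]].
  set Xu := [set f in B | u \in f].
  set Xv := [set f in B | v \in f].
  have hsub : [set f in B | adj e f] \subset (Xu :\ e) :|: (Xv :\ e).
    apply/subsetP => f; rewrite !inE /adj => /andP[fB /andP[fe]].
    rewrite -setI_eq0 => /set0Pn [x]; rewrite !inE => /andP[xe xf].
    rewrite fe fB /=; move: xe; rewrite de !inE => /orP[/eqP ex|/eqP ex];
      rewrite -ex xf ?orbT //.
  have eXu : e \in Xu by rewrite inE eB de !inE eqxx.
  have eXv : e \in Xv by rewrite inE eB de !inE eqxx orbT.
  have cu : (#|Xu :\ e| + 1 <= b)%N.
    have e1 := cardsD1 e Xu; rewrite eXu in e1.
    have := forallP hB u; rewrite /edeg -/Xu; lia.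
  have cv : (#|Xv :\ e| + 1 <= b)%N.
    have e1 := cardsD1 e Xv; rewrite eXv in e1.
    have := forallP hB v; rewrite /edeg -/Xv; lia.
  have := subset_leq_card hsub.
  have := leq_card_setU (Xu :\ e) (Xv :\ e).
  move=> /leqifP; case: ifP => _ H1 H2; rewrite /dS; lia.
rewrite /PS (mulnC 2) (mulnC (2 * b)) -!sum_nat_const -big_split /=.
apply: leq_sum => e eB; exact: h.
Qed.

End Prob.

Theorem mainTheorem5 (R : archiRealFieldType) (V : finType) (p : R)
    (B : {set {set V}}) :
  0 < p -> p < 1 ->
  edge_set B ->
  is_bmatching (Num.truncn p^-1) B ->
  exp_mu_sample p B >=
    (#|B|%:R / (Num.truncn p^-1)%:R) * ((1 - 3 * p) / 3).
Proof.
move=> p0 p1 hE hB.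
have pinv0 : 0 <= p^-1 by rewrite invr_ge0 ltW.
have /andP[hb1 hb2] := truncn_itv pinv0.
have bpos : (0 < Num.truncn p^-1)%N by rewrite truncn_gt0 invf_ge1 // ltW.
set b := Num.truncn p^-1 in hB hb1 hb2 bpos *.
have bb0 : 0 < (b%:R : R) by rewrite ltr0n.
have y1 : b%:R * p <= 1.
  by have := ler_wpM2r (ltW p0) hb1; rewrite mulVf ?lt0r_neq0.
have y0 : 1 < (b%:R + 1) * p.
  by have h := hb2; rewrite -(ltr_pM2r p0) mulVf ?lt0r_neq0 // -natr1 in h.
have hdeg := @deg_bound V B b hE hB.
have hdegR : ((PS B)%:R : R) + 2 * #|B|%:R <= 2 * b%:R * #|B|%:R.
  by rewrite -!natrM -natrD ler_nat.
have hw : forall S : {set {set V}}, 0 <= @w R V p B S.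
  move=> S; rewrite /w; apply: mulr_ge0; apply: exprn_ge0 => //.
    exact: ltW.
  by rewrite subr_ge0 ltW.
have hE9 : 5 * (p * #|B|%:R) - p ^+ 2 * (PS B)%:R <= 9 * exp_mu_sample p B.
  rewrite -ES -EP mulr_sumr -sumrB /exp_mu_sample mulr_sumr.
  apply: ler_sum => S _.
  have := @comb_main V _ S (leqnn #|S|).
  rewrite -(ler_nat R) natrD !natrM => hc.
  have := hw S; rewrite /w => hwS.
  move: hc hwS.
  set W := p ^+ #|S| * (1 - p) ^+ (#|B| - #|S|).
  set s : R := #|S|%:R; set m : R := (mu S)%:R; set P : R := (PS S)%:R.
  move=> hc hwS.
  have hc' : 5 * s - P <= 9 * m by rewrite lerBlDr.
  have := ler_wpM2l hwS hc'.
  have -> : 5 * (W * s) - W * P = W * (5 * s - P) by ring.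
  have -> : 9 * (W * m) = W * (9 * m) by ring.
  done.
set n : R := #|B|%:R in hdegR hE9 *.
set PB : R := (PS B)%:R in hdegR hE9 *.
set E := exp_mu_sample p B in hE9 *.
set bb : R := b%:R in bb0 y1 y0 hdegR *.
have n0 : 0 <= n by rewrite /n ler0n.
have PB0 : 0 <= PB by rewrite /PB ler0n.
have -> : n / bb * ((1 - 3 * p) / 3) = (n * (1 - 3 * p)) / (3 * bb).
  by field; rewrite lt0r_neq0.
rewrite ler_pdivrMr; last by rewrite mulr_gt0.
set y := bb * p.
have key : 0 <= 5 * y - 2 * y ^+ 2 + 2 * p * y - 3 + 9 * p.
  have h1 : 1 - p < y by rewrite /y; lra.
  have y2 : y <= 1 by [].
  have t1 : 0 <= y * (1 - y) by apply: mulr_ge0; lra.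
  have t2 : 0 <= p * y by apply: mulr_ge0; lra.
  lra.
have hk := mulr_ge0 n0 key.
have hP2 : p ^+ 2 * bb * PB <= p ^+ 2 * bb * (2 * bb * n - 2 * n).
  apply: ler_wpM2l; first by apply: mulr_ge0; [apply: exprn_ge0; exact: ltW | exact: ltW].
  lra.
have hX : (5 * (p * n) - p ^+ 2 * PB) * bb <= 9 * E * bb.
  by apply: ler_wpM2r => //; exact: ltW.
rewrite /y in hk.
lra.
Qed.
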